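(* Let $\mathbb{K}$ be a valued field, $E$, $F$, $H$ topological $\mathbb{K}$-vector spaces, $U\subseteq E$ and $V\subseteq F$ subsets with dense interior, $k\in\mathbb{N}_0$, $\sigma\in\,]0,1]$, $\tau>0$, $f\colon U\to V$ a $C^{k,\sigma}_{BGN}$-map (as a map into $F$) and $g\colon V\to H$ a $C^{k,\tau}_{BGN}$-map. Then $g\circ f\colon U\to H$ is $C^{k,\sigma\cdot\tau}_{BGN}$.
   Context: Valued field: field with absolute value defining a non-discrete topology; vector spaces Hausdorff. $C^k_{BGN}$: for $W\subseteq E$ with dense interior, $W^{[1]}=\{(x,y,t)\in W\times E\times\mathbb{K}:x+ty\in W\}$, $W^{]1[}$ its subset with $t\ne0$, $g^{]1[}(x,y,t)=(g(x+ty)-g(x))/t$; $g$ is $C^0_{BGN}$ if continuous, $C^1_{BGN}$ if continuous and $g^{]1[}$ extends continuously to $g^{[1]}$ on $W^{[1]}$, $C^k_{BGN}$ if $C^1_{BGN}$ with $g^{[1]}$ $C^{k-1}_{BGN}$; $g^{[k]}=(g^{[1]})^{[k-1]}$, $g^{[0]}=g$. Gauge: $q\colon E\to[0,\infty[$ with $q(tx)=|t|q(x)$ and each $\{q<r\}$ a $0$-neighbourhood. $g\colon W\to F$ is $C^{0,\sigma}$ if for every $x_0\in W$ and gauge $q$ on $F$ there exist a gauge $p$ on $E$ and a neighbourhood $W_0$ of $x_0$ in $W$ with $q(g(y)-g(x))\le p(y-x)^\sigma$ for $x,y\in W_0$. $C^{k,\sigma}_{BGN}$: $C^k_{BGN}$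 and each $g^{[j]}$, $j\le k$, is $C^{0,\sigma}$. *)

(* Defs.v *)
From mathcomp Require Import all_boot all_order all_algebra.
From mathcomp Require Import classical_sets reals exp.
Set Implicit Arguments. Unset Strict Implicit. Unset Printing Implicit Defensive.
Import Order.TTheory GRing.Theory Num.Theory.
Local Open Scope classical_set_scope.
Local Open Scope ring_scope.

Section BGN.
Variables (R : realType) (K : fieldType) (abs : K -> R).

Definition is_absval : Prop :=
  [/\ forall x, abs x = 0 <-> x = 0,
      forall x, 0 <= abs x,
      forall x y, abs (x * y) = abs x * abs y &
      forall x y, abs (x + y) <= abs x + abs y].

Definition openK : set (set K^o) :=
  fun O => forall x, O x -> exists2 r : R, 0 < r & forall y, abs (y - x) < r -> O y.

Definition nondiscrete : Prop := ~ openK [set 0].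

Definition is_topology {T : Type} (op : set (set T)) : Prop :=
  [/\ op setT,
      forall A B, op A -> op B -> op (A `&` B) &
      forall (I : Type) (G : I -> set T), (forall i, op (G i)) -> op (\bigcup_i G i)].

Definition hausdorff {T : Type} (op : set (set T)) : Prop :=
  forall x y : T, x <> y -> exists U, exists V,
    [/\ op U, op V, U x, V y & U `&` V = set0].

Definition prod_open {A B : Type} (opA : set (set A)) (opB : set (set B))
  : set (set (A * B)) :=
  fun O => forall z, O z -> exists U, exists V,
    [/\ opA U, opB V, U z.1, V z.2 & forall a b, U a -> V b -> O (a, b)].

Definition continuous_on {A B : Type} (opA : set (set A)) (opB : set (set B))
  (W : set A) (f : A -> B) : Prop :=
  forall x, W x -> forall O, opB O -> O (f x) ->
    exists2 U, opA U /\ U x & forall y, W y -> U y -> O (f y).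

Definition interior_of {T : Type} (op : set (set T)) (W : set T) : set T :=
  fun x => exists2 U, op U /\ U x & U `<=` W.

Definition dense_interior {T : Type} (op : set (set T)) (W : set T) : Prop :=
  forall x, W x -> forall O, op O -> O x -> exists y, O y /\ interior_of op W y.

Definition is_tvs (E : lmodType K) (op : set (set E)) : Prop :=
  [/\ is_topology op,
      continuous_on (prod_open op op) op setT (fun z => z.1 + z.2),
      continuous_on (prod_open openK op) op setT (fun z => z.1 *: z.2) &
      hausdorff op].

Definition is_gauge (E : lmodType K) (op : set (set E)) (q : E -> R) : Prop :=
  [/\ forall x, 0 <= q x,
      forall (t : K) x, q (t *: x) = abs t * q x &
      forall r : R, 0 < r -> exists2 U, op U /\ U 0 & U `<=` [set x | q x < r]].

Definition C0holder (s : R) (E F : lmodType K) (opE : set (set E))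
  (opF : set (set F)) (W : set E) (g : E -> F) : Prop :=
  forall x0, W x0 -> forall q, is_gauge opF q ->
    exists p, is_gauge opE p /\
    exists2 U, opE U /\ U x0 &
      forall x y, W x -> U x -> W y -> U y -> q (g y - g x) <= p (y - x) `^ s.

Definition W1 (E : lmodType K) (W : set E) : set (E * E * K^o) :=
  fun z => W z.1.1 /\ W (z.1.1 + z.2 *: z.1.2).

Definition W1open (E : lmodType K) (W : set E) : set (E * E * K^o) :=
  fun z => W1 W z /\ z.2 <> 0.

Definition diffquot (E F : lmodType K) (g : E -> F) (z : E * E * K^o) : F :=
  z.2^-1 *: (g (z.1.1 + z.2 *: z.1.2) - g z.1.1).

Definition topE1 (E : lmodType K) (op : set (set E)) : set (set (E * E * K^o)) :=
  prod_open (prod_open op op) openK.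

(** C^{k,s}_{BGN}: g is C^k_BGN and every g^{[j]} (j <= k) is C^{0,s}.
    g^{[1]} is (the, unique by density and Hausdorffness) continuous
    extension of g^{]1[} to W^{[1]}. *)
Fixpoint CkHolder (s : R) (k : nat) : forall (E F : lmodType K)
  (opE : set (set E)) (opF : set (set F)) (W : set E) (g : E -> F), Prop :=
  match k with
  | 0 => fun E F opE opF W g =>
      continuous_on opE opF W g /\ C0holder s opE opF W g
  | k'.+1 => fun E F opE opF W g =>
      [/\ continuous_on opE opF W g, C0holder s opE opF W g &
        exists g1 : E * E * K^o -> F,
          [/\ continuous_on (topE1 opE) opF (W1 W) g1,
              forall z, W1open W z -> g1 z = diffquot g z &
              CkHolder s k' (topE1 opE) opF (W1 W) g1]]
  end.

End BGN.

(* Main.v *)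
Require Import Defs.
From mathcomp Require Import all_boot all_order all_algebra.
From mathcomp Require Import classical_sets reals exp boolp.
From mathcomp Require Import ring lra.
Set Implicit Arguments. Unset Strict Implicit. Unset Printing Implicit Defensive.
Import Order.TTheory GRing.Theory Num.Theory.
Local Open Scope classical_set_scope.
Local Open Scope ring_scope.
Section Aux.
Variables (R : realType) (K : fieldType) (abs : K -> R).
Hypothesis Habs : is_absval abs.
Hypothesis Hnd : nondiscrete abs.

Lemma abs_eq0 x : abs x = 0 <-> x = 0.
Proof. by case: Habs. Qed.
Lemma abs_ge0 x : 0 <= abs x.
Proof. by case: Habs. Qed.
Lemma absM x y : abs (x * y) = abs x * abs y.
Proof. by case: Habs. Qed.
Lemma absD x y : abs (x + y) <= abs x + abs y.
Proof. by case: Habs. Qed.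
Lemma abs0 : abs 0 = 0.
Proof. exact/abs_eq0. Qed.
Lemma abs_gt0 x : x != 0 -> 0 < abs x.
Proof.
move=> nx; rewrite lt_neqAle abs_ge0 andbT eq_sym; apply/eqP => /abs_eq0 h.
by rewrite h eqxx in nx.
Qed.
Lemma abs1 : abs 1 = 1.
Proof.
have h := absM 1 1; rewrite mul1r in h.
have h0 : abs 1 != 0 by apply: lt0r_neq0; apply: abs_gt0; exact: oner_neq0.
by apply: (mulfI h0); rewrite -h mulr1.
Qed.
Lemma absN1 : abs (-1) = 1.
Proof.
have h := absM (-1) (-1); rewrite mulrNN mulr1 abs1 in h.
have h0 := abs_ge0 (-1).
nra.
Qed.
Lemma absN x : abs (- x) = abs x.
Proof. by rewrite -mulN1r absM absN1 mul1r. Qed.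
Lemma absB x y : abs (x - y) = abs (y - x).
Proof. by rewrite -absN opprB. Qed.
Lemma absV x : abs (x^-1) = (abs x)^-1.
Proof.
have [->|nx] := eqVneq x 0; first by rewrite invr0 abs0 invr0.
have h := absM x x^-1; rewrite mulfV // abs1 in h.
have h0 : abs x != 0 by apply: lt0r_neq0; exact: abs_gt0.
by apply: (mulfI h0); rewrite -h mulfV.
Qed.

Lemma small_elt (r : R) : 0 < r -> exists y : K, y != 0 /\ abs y < r.
Proof.
move=> r0; apply: contrapT => H; apply: Hnd => x /= ->.
exists r => // y; rewrite subr0 => hy; apply: contrapT => ny; apply: H.
by exists y; split => //; apply/eqP.
Qed.

Lemma abs_pi : exists pi : K, pi != 0 /\ abs pi < 1.
Proof. exact: small_elt. Qed.

Definition tvsl (E : lmodType K) (op : set (set E)) : Prop :=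
  [/\ op setT, (forall A B, op A -> op B -> op (A `&` B)),
      continuous_on (prod_open op op) op setT (fun z => z.1 + z.2) &
      continuous_on (prod_open (openK abs) op) op setT (fun z => z.1 *: z.2)].

Lemma tvs_tvsl (E : lmodType K) (op : set (set E)) : is_tvs abs op -> tvsl op.
Proof. by case=> -[? ? _] ? ? _; split. Qed.

Lemma cont2 {A B C : Type} (opA : set (set A)) (opB : set (set B)) (opC : set (set C))
  (f : A * B -> C) a b O :
  continuous_on (prod_open opA opB) opC setT f -> opC O -> O (f (a, b)) ->
  exists UA, exists UB, [/\ opA UA, opB UB, UA a, UB b &
     forall a' b', UA a' -> UB b' -> O (f (a', b'))].
Proof.
move=> hf oO Of; have [U [oU Uab] HU] := hf (a, b) I O oO Of.
have [UA [UB [oA oB Aa Bb HAB]]] := oU (a, b) Uab.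
by exists UA, UB; split => // a' b' ha hb; apply: HU => //; apply: HAB.
Qed.

Lemma prod_rect {A B : Type} (opA : set (set A)) (opB : set (set B)) UA UB :
  opA UA -> opB UB -> prod_open opA opB [set z | UA z.1 /\ UB z.2].
Proof. by move=> oA oB z [h1 h2]; exists UA, UB; split => // a b ? ?. Qed.

Lemma prod_setT {A B : Type} (opA : set (set A)) (opB : set (set B)) :
  opA setT -> opB setT -> prod_open opA opB setT.
Proof. by move=> oA oB z _; exists setT, setT; split. Qed.

Lemma prod_setI {A B : Type} (opA : set (set A)) (opB : set (set B)) :
  (forall X Y, opA X -> opA Y -> opA (X `&` Y)) ->
  (forall X Y, opB X -> opB Y -> opB (X `&` Y)) ->
  forall X Y, prod_open opA opB X -> prod_open opA opB Y -> prod_open opA opB (X `&` Y).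
Proof.
move=> hA hB X Y oX oY z [Xz Yz].
have [U1 [V1 [oU1 oV1 U1z V1z H1]]] := oX z Xz.
have [U2 [V2 [oU2 oV2 U2z V2z H2]]] := oY z Yz.
exists (U1 `&` U2), (V1 `&` V2); split; [exact: hA|exact: hB|by []|by []|].
by move=> a b [? ?] [? ?]; split; [apply: H1|apply: H2].
Qed.

Lemma ball_open (a : K) (r : R) : openK abs [set y : K^o | abs (y - a) < r].
Proof.
move=> y /= hy; exists (r - abs (y - a)); first by rewrite subr_gt0.
move=> z hz; have := absD (z - y) (y - a).
rewrite [z - y + _]addrA subrK => h; apply: (le_lt_trans h).
by rewrite -ltrBrDr.
Qed.

Lemma openK_setI (X Y : set K^o) : openK abs X -> openK abs Y -> openK abs (X `&` Y).
Proof.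
move=> oX oY x [Xx Yx].
have [r1 r10 H1] := oX x Xx; have [r2 r20 H2] := oY x Yx.
exists (Num.min r1 r2); first by rewrite lt_min r10 r20.
by move=> y; rewrite lt_min => /andP[h1 h2]; split; [apply: H1|apply: H2].
Qed.

Lemma tvsl_K : tvsl (openK abs : set (set K^o)).
Proof.
split.
- by move=> x _; exists 1 => //.
- exact: openK_setI.
- move=> [a b] _ O oO /= Oab; have [r r0 Hr] := oO _ Oab.
  exists [set z : K^o * K^o | abs (z.1 - a) < r / 2 /\ abs (z.2 - b) < r / 2].
    split; last by rewrite /= !subrr abs0 divr_gt0.
    move=> z [h1 h2]; exists [set y | abs (y - a) < r / 2], [set y | abs (y - b) < r / 2].
    by split => //; apply: ball_open.
  move=> [a' b'] _ /= [h1 h2]; apply: Hr.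
  have -> : a' + b' - (a + b) = (a' - a) + (b' - b) by rewrite addrACA opprD.
  apply: (le_lt_trans (absD _ _)).
  by rewrite [r]splitr; apply: ltrD.
- move=> [t0 y0] _ O oO /= Oty; have [r r0 Hr] := oO _ Oty.
  set M := abs t0 + abs y0 + 1.
  have M0 : 0 < M by rewrite /M ltr_wpDl // addr_ge0 // abs_ge0.
  set d := r / (M + r).
  have Mr0 : 0 < M + r by rewrite addr_gt0.
  have d0 : 0 < d by rewrite divr_gt0.
  have d1 : d < 1 by rewrite /d ltr_pdivrMr // mul1r ltrDr.
  have dM : d * M <= r.
    by rewrite /d mulrAC ler_pdivrMr // ler_pM2l // lerDl ltW.
  exists [set z : K^o * K^o | abs (z.1 - t0) < d /\ abs (z.2 - y0) < d].
    split; last by rewrite /= !subrr abs0.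
    move=> z [h1 h2]; exists [set y | abs (y - t0) < d], [set y | abs (y - y0) < d].
    by split => //; apply: ball_open.
  move=> [t y] _ /= [h1 h2]; apply: Hr.
  have -> : t * y - t0 * y0 = t * (y - y0) + (t - t0) * y0 by ring.
  apply: (le_lt_trans (absD _ _)); rewrite !absM.
  have ht : abs t <= abs t0 + abs (t - t0).
    by have := absD t0 (t - t0); rewrite addrC subrK.
  have e1 := abs_ge0 (y - y0); have e2 := abs_ge0 (t - t0).
  have e3 := abs_ge0 t0; have e4 := abs_ge0 y0; have e5 := abs_ge0 t.
  rewrite /M in dM; nra.
Qed.

End Aux.
Section Aux2.
Variables (R : realType) (K : fieldType) (abs : K -> R).
Hypothesis Habs : is_absval abs.
Hypothesis Hnd : nondiscrete abs.

Lemma tvsl_prod (E1 E2 : lmodType K) (op1 : set (set E1)) (op2 : set (set E2)) :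
  tvsl abs op1 -> tvsl abs op2 -> tvsl abs (prod_open op1 op2 : set (set (E1 * E2)%type)).
Proof.
move=> [hT1 hI1 ha1 hs1] [hT2 hI2 ha2 hs2]; split.
- exact: prod_setT.
- exact: prod_setI.
- move=> [[x1 x2] [y1 y2]] _ O oO /= Oxy.
  have [O1 [O2 [oO1 oO2 O1x O2x HO]]] := oO _ Oxy.
  have [A1 [B1 [oA1 oB1 A1x B1y H1]]] := cont2 ha1 oO1 O1x.
  have [A2 [B2 [oA2 oB2 A2x B2y H2]]] := cont2 ha2 oO2 O2x.
  exists [set z : (E1 * E2) * (E1 * E2) | (A1 z.1.1 /\ A2 z.1.2) /\ (B1 z.2.1 /\ B2 z.2.2)].
    split; last by [].
    move=> z [[h1 h2] [h3 h4]].
    exists [set w | A1 w.1 /\ A2 w.2], [set w | B1 w.1 /\ B2 w.2].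
    by split => //; apply: prod_rect.
  move=> [[a1 a2] [b1 b2]] _ /= [[? ?] [? ?]].
  by apply: (HO (a1 + b1) (a2 + b2)); [apply: H1|apply: H2].
- move=> [t [x1 x2]] _ O oO /= Oxy.
  have [O1 [O2 [oO1 oO2 O1x O2x HO]]] := oO _ Oxy.
  have [T1 [A1 [oT1 oA1 T1t A1x H1]]] := cont2 hs1 oO1 O1x.
  have [T2 [A2 [oT2 oA2 T2t A2x H2]]] := cont2 hs2 oO2 O2x.
  exists [set z : K^o * (E1 * E2) | (T1 z.1 /\ T2 z.1) /\ (A1 z.2.1 /\ A2 z.2.2)].
    split; last by [].
    move=> z [[h1 h2] [h3 h4]].
    exists (T1 `&` T2), [set w | A1 w.1 /\ A2 w.2].
    by split => //; [apply: openK_setI|apply: prod_rect].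
  move=> [s [a1 a2]] _ /= [[? ?] [? ?]].
  by apply: (HO (s *: a1) (s *: a2)); [apply: H1|apply: H2].
Qed.

Lemma tvsl_E1 (E : lmodType K) (op : set (set E)) : tvsl abs op -> tvsl abs (topE1 abs op).
Proof. by move=> h; apply: tvsl_prod; [apply: tvsl_prod|apply: tvsl_K]. Qed.

End Aux2.
Section Gauge.
Variables (R : realType) (K : fieldType) (abs : K -> R).
Hypothesis Habs : is_absval abs.
Hypothesis Hnd : nondiscrete abs.

Lemma gauge_max (E : lmodType K) (op : set (set E)) p q :
  (forall A B, op A -> op B -> op (A `&` B)) ->
  is_gauge abs op p -> is_gauge abs op q -> is_gauge abs op (fun x => Num.max (p x) (q x)).
Proof.
move=> hI [p0 pH pN] [q0 qH qN]; split.
- by move=> x; rewrite le_max p0.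
- by move=> t x; rewrite pH qH maxr_pMr // (abs_ge0 Habs).
- move=> r r0; have [U [oU U0] HU] := pN r r0; have [V [oV V0] HV] := qN r r0.
  exists (U `&` V); first by split; [apply: hI|].
  by move=> x [Ux Vx]; rewrite /= gt_max (HU x Ux) (HV x Vx).
Qed.

Lemma gauge_scale (E : lmodType K) (op : set (set E)) p (c : R) :
  0 < c -> is_gauge abs op p -> is_gauge abs op (fun x => c * p x).
Proof.
move=> c0 [p0 pH pN]; split.
- by move=> x; rewrite mulr_ge0 // ltW.
- by move=> t x; rewrite pH mulrCA.
- move=> r r0; have [U [oU U0] HU] := pN (r / c) (divr_gt0 r0 c0).
  exists U => // x /HU /=; rewrite ltr_pdivlMr // => h; by rewrite mulrC.
Qed.

Lemma gauge_lin (E F : lmodType K) (opE : set (set E)) (opF : set (set F)) (L : E -> F) q :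
  (forall (t : K) x, L (t *: x) = t *: L x) ->
  continuous_on opE opF setT L -> is_gauge abs opF q -> is_gauge abs opE (fun x => q (L x)).
Proof.
move=> LZ Lc [q0 qH qN]; split => //.
- by move=> t x; rewrite LZ qH.
- move=> r r0; have [O [oO O0] HO] := qN r r0.
  have L0 : L 0 = 0 by have := LZ 0 0; rewrite !scale0r.
  have OL0 : O (L 0) by rewrite L0.
  have [U [oU U0] HU] := Lc 0 I O oO OL0.
  by exists U => // x Ux; apply: HO; apply: HU.
Qed.

Lemma minkowski (E : lmodType K) (op : set (set E)) : tvsl abs op ->
  forall A0, op A0 -> A0 0 -> exists mu, is_gauge abs op mu /\
   forall a (l : K), l != 0 -> mu a < abs l -> A0 (l^-1 *: a).
Proof.
move=> [hT hI ha hs] A0 oA0 A00.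
pose B := fun x : E => forall u : K, abs u <= 1 -> A0 (u *: x).
pose S := fun a : E => [set r : R | exists t : K, [/\ t != 0, B (t^-1 *: a) & r = abs t]].
pose mu := fun a => inf (S a).
have absorb : forall a, exists2 d : R, 0 < d & forall s, abs s < d -> B (s *: a).
  move=> a; have h0 : A0 ((0 : K^o, a).1 *: (0 : K^o, a).2) by rewrite /= scale0r.
  have [T [N [oT oN T0 Na H]]] := cont2 (a := (0 : K^o)) (b := a) hs oA0 h0.
  have [d d0 Hd] := oT 0 T0.
  exists d => // s hs' u hu; rewrite scalerA; apply: (H (u * s) a) => //; apply: Hd.
  rewrite subr0 (absM Habs).
  have := abs_ge0 Habs s; have := abs_ge0 Habs u; nra.
have Sne : forall a, S a !=set0.
  move=> a; have [d d0 Hd] := absorb a.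
  have [s [s0 hs']] := small_elt Hnd d0.
  exists (abs s^-1), s^-1; split => //; first by rewrite invr_eq0.
  by rewrite invrK; apply: Hd.
have Slb : forall a, lbound (S a) 0.
  by move=> a r [t [_ _ ->]]; apply: abs_ge0.
have Shl : forall a, has_lbound (S a) by move=> a; exists 0; apply: Slb.
have mu0 : forall a, 0 <= mu a by move=> a; apply: lb_le_inf.
have muS : forall a r, S a r -> mu a <= r by move=> a r Sr; apply: ge_inf.
have le1 : forall (s : K) a, s != 0 -> mu (s *: a) <= abs s * mu a.
  move=> s a s0; rewrite mulrC -ler_pdivrMr; last exact: abs_gt0.
  apply: lb_le_inf => // r [t [t0 Bt ->]].
  rewrite ler_pdivrMr; last exact: abs_gt0.
  rewrite mulrC -(absM Habs); apply: muS; exists (s * t); split.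
  - by rewrite mulf_neq0.
  - by rewrite scalerA invfM mulrAC mulVf // mul1r.
  - by [].
exists mu; split; last first.
  move=> a l l0 mul; have [r [t [t0 Bt ->]] tl] := inf_lt (Sne a) mul.
  have -> : l^-1 *: a = (l^-1 * t) *: (t^-1 *: a) by rewrite scalerA mulfK.
  apply: Bt; rewrite (absM Habs) (absV Habs) mulrC ler_pdivrMr ?mul1r.
    exact: ltW.
  exact: abs_gt0.
split => //.
- move=> s a; have [->|s0] := eqVneq s 0.
    rewrite scale0r (abs0 Habs) mul0r; apply/eqP; rewrite eq_le mu0 andbT.
    apply/negPn/negP; rewrite -ltNge => mp.
    have [t [t0 ht]] := small_elt Hnd mp.
    have : mu 0 <= abs t.
      apply: muS; exists t; split => //.
      by rewrite scaler0 => u _; rewrite scaler0.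
    by rewrite leNgt ht.
  apply/eqP; rewrite eq_le le1 //=.
  have h := le1 s^-1 (s *: a); rewrite invr_eq0 in h; have {}h := h s0.
  rewrite scalerA mulVf // scale1r (absV Habs) in h.
  rewrite mulrC -ler_pdivlMr; first by rewrite mulrC.
  exact: abs_gt0.
- move=> r r0.
  have h0 : A0 ((0 : K^o, 0 : E).1 *: (0 : K^o, 0 : E).2) by rewrite /= scale0r.
  have [T [N [oT oN T0 N0 H]]] := cont2 (a := (0 : K^o)) (b := (0 : E)) hs oA0 h0.
  have [dl dl0 Hdl] := oT 0 T0.
  have [d [d0 hd]] := small_elt Hnd dl0.
  have [t [t0 ht]] := small_elt Hnd r0.
  pose c := (t * d)^-1.
  have h1 : N ((c : K^o, 0 : E).1 *: (c : K^o, 0 : E).2) by rewrite /= scaler0.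
  have [T' [U [oT' oU T'c U0 H']]] := cont2 (a := (c : K^o)) (b := (0 : E)) hs oN h1.
  exists U => // x Ux; apply: (@le_lt_trans _ _ (abs t)) => //; apply: muS.
  exists t; split => // u hu.
  have -> : u *: (t^-1 *: x) = (u * d) *: (c *: x).
    by rewrite !scalerA /c invfM mulrA [u * d * _]mulrAC mulfK.
  apply: (H (u * d) (c *: x)); last by apply: (H' c x).
  apply: Hdl; rewrite subr0 (absM Habs).
  have := abs_ge0 Habs u; have := abs_ge0 Habs d; nra.
Qed.

End Gauge.
Section Bracket.
Variables (R : realType) (K : fieldType) (abs : K -> R).
Hypothesis Habs : is_absval abs.
Hypothesis Hnd : nondiscrete abs.

Lemma absX (x : K) n : abs (x ^+ n) = abs x ^+ n.
Proof.
elim: n => [|n IH]; first by rewrite !expr0 (abs1 Habs).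
by rewrite !exprS (absM Habs) IH.
Qed.

Lemma bernoulli (d : R) n : 0 <= d -> 1 + n%:R * d <= (1 + d) ^+ n.
Proof.
move=> d0; elim: n => [|n IH]; first by rewrite expr0 mul0r addr0.
rewrite exprS -addn1 natrD mulrDl mul1r.
have h1 : 0 <= n%:R * d by rewrite mulr_ge0.
nra.
Qed.

Lemma pow_small (c : R) : 0 < c -> c < 1 -> forall e, 0 < e -> exists n, c ^+ n < e.
Proof.
move=> c0 c1 e e0.
set d := c^-1 - 1.
have d0 : 0 < d by rewrite /d subr_gt0 invf_gt1.
have hx : 0 <= (e * d)^-1 by rewrite invr_ge0 ltW // mulr_gt0.
have := archi_boundP hx.
set n := Num.bound _ => hn.
exists n.
have hb := bernoulli n (ltW d0).
have e1 : 1 + d = c^-1 by rewrite /d addrC subrK.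
rewrite e1 exprVn in hb.
have hn' : 1 < n%:R * (e * d).
  by rewrite -ltr_pdivrMr ?mulr_gt0 // div1r.
have cn0 : 0 < c ^+ n by rewrite exprn_gt0.
have zw : c ^+ n * (c ^+ n)^-1 = 1 by rewrite mulfV // gt_eqF.
have w0 : 0 < (c ^+ n)^-1 by rewrite invr_gt0.
move: hb hn' zw w0 cn0; set z := c ^+ n; set w := z^-1; set N := n%:R => hb hn' zw w0 cn0.
have N0 : 0 <= N by rewrite /N ler0n.
nra.
Qed.

Lemma bracket (pi : K) : pi != 0 -> abs pi < 1 -> forall a b : R, 0 <= a -> a < b * abs pi ->
  exists l : K, [/\ l != 0, a < abs l & abs l <= b].
Proof.
move=> pi0 pi1 a b a0 ab.
set c := abs pi in pi1 ab.
have c0 : 0 < c by apply: abs_gt0.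
have b0 : 0 < b by rewrite -(pmulr_lgt0 _ c0); apply: le_lt_trans ab.
have bi : 0 < b^-1 by rewrite invr_gt0.
have [k hk] := pow_small c0 pi1 bi.
have ck0 : 0 < c ^+ k by rewrite exprn_gt0.
have hk' : b * c ^+ k < 1 by rewrite mulrC -ltr_pdivlMr // div1r.
have [m0 hm0] := pow_small c0 pi1 (mulr_gt0 b0 ck0).
have exP : exists n, c ^+ n <= b * c ^+ k by exists m0; apply: ltW.
case: (ex_minnP exP) => m hm hmin.
case: m hm hmin => [|m] hm hmin.
  by move: hm; rewrite expr0 leNgt hk'.
have hlt : b * c ^+ k < c ^+ m.
  rewrite ltNge; apply/negP => h; have := hmin m h; by rewrite ltnn.
exists (pi ^+ m.+1 / pi ^+ k); split.
- by rewrite mulf_neq0 ?invr_eq0 ?expf_neq0.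
- rewrite (absM Habs) (absV Habs) !absX -/c ltr_pdivlMr //.
  rewrite exprS; nra.
- by rewrite (absM Habs) (absV Habs) !absX -/c ler_pdivrMr.
Qed.

Lemma prod_gauge_bound (E1 E2 : lmodType K) (op1 : set (set E1)) (op2 : set (set E2)) :
  tvsl abs op1 -> tvsl abs op2 ->
  forall P, is_gauge abs (prod_open op1 op2 : set (set (E1 * E2)%type)) P ->
  exists q1, exists q2, [/\ is_gauge abs op1 q1, is_gauge abs op2 q2 &
     forall a b, P (a, b) <= Num.max (q1 a) (q2 b)].
Proof.
move=> h1 h2 P [P0 PH PN].
have [O [oO O0] HO] := PN 1 ltr01.
have [A0 [B0 [oA oB A00 B00 HAB]]] := oO 0 O0.
have [mu1 [g1 k1]] := minkowski Habs Hnd h1 oA A00.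
have [mu2 [g2 k2]] := minkowski Habs Hnd h2 oB B00.
have [pi [pi0 pi1]] := abs_pi Hnd.
set c := abs pi in pi1.
have c0 : 0 < c by apply: abs_gt0.
exists (fun a => c^-1 * mu1 a), (fun b => c^-1 * mu2 b); split.
- by apply: gauge_scale; rewrite ?invr_gt0.
- by apply: gauge_scale; rewrite ?invr_gt0.
move=> a b; rewrite -maxr_pMr; last by rewrite invr_ge0 ltW.
set m := Num.max (mu1 a) (mu2 b).
have m0 : 0 <= m by rewrite le_max; case: g1 => -> _ _.
rewrite mulrC -ler_pdivrMr ?invr_gt0 // invrK.
rewrite leNgt; apply/negP => hm.
have [l [l0 ml lP]] := bracket pi0 pi1 m0 hm.
have hA : A0 (l^-1 *: a) by apply: k1 => //; apply: le_lt_trans ml; rewrite le_max lexx.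
have hB : B0 (l^-1 *: b) by apply: k2 => //; apply: le_lt_trans ml; rewrite le_max lexx orbT.
have := HO _ (HAB _ _ hA hB).
have -> : (l^-1 *: a, l^-1 *: b) = l^-1 *: ((a, b) : E1 * E2) by [].
rewrite /= PH (absV Habs) -ltr_pdivlMl ?invr_gt0 ?abs_gt0 // invrK mulr1.
by rewrite ltNge lP.
Qed.

End Bracket.
Section Ck.
Variables (R : realType) (K : fieldType) (abs : K -> R).
Hypothesis Habs : is_absval abs.
Hypothesis Hnd : nondiscrete abs.

Lemma Ck_cont s k (E F : lmodType K) (opE : set (set E)) (opF : set (set F)) W g :
  CkHolder abs s k opE opF W g -> continuous_on opE opF W g /\ C0holder abs s opE opF W g.
Proof. by case: k => [|k] /=; [case | case]. Qed.

Lemma Ck_down s k : forall (E F : lmodType K) (opE : set (set E)) (opF : set (set F)) W g,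
  CkHolder abs s k.+1 opE opF W g -> CkHolder abs s k opE opF W g.
Proof.
elim: k => [|k IH] E F opE opF W g /=.
- by case=> ? ? _; split.
- case=> c h [g1 [c1 e1 H1]]; split => //; exists g1; split => //; exact: IH.
Qed.

Lemma cont_sub {A B : Type} (opA : set (set A)) (opB : set (set B)) W (f : A -> B) :
  continuous_on opA opB setT f -> continuous_on opA opB W f.
Proof.
move=> h x _ O oO Ox; have [U hU HU] := h x I O oO Ox.
by exists U => // y _ Uy; apply: HU.
Qed.

Lemma cont_fst {A B : Type} (opA : set (set A)) (opB : set (set B)) :
  opB setT -> continuous_on (prod_open opA opB) opA setT fst.
Proof.
move=> hT x _ O oO Ox; exists [set z | O z.1]; last by move=> y _.
by split => // z Oz; exists O, setT; split.
Qed.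

Lemma cont_snd {A B : Type} (opA : set (set A)) (opB : set (set B)) :
  opA setT -> continuous_on (prod_open opA opB) opB setT snd.
Proof.
move=> hT x _ O oO Ox; exists [set z | O z.2]; last by move=> y _.
by split => // z Oz; exists setT, O; split.
Qed.

Lemma cont_comp {A B C : Type} (opA : set (set A)) (opB : set (set B)) (opC : set (set C))
  (f : A -> B) (g : B -> C) :
  continuous_on opA opB setT f -> continuous_on opB opC setT g ->
  continuous_on opA opC setT (g \o f).
Proof.
move=> hf hg x _ O oO Ox; have [V [oV Vfx] HV] := hg (f x) I O oO Ox.
have [U [oU Ux] HU] := hf x I V oV Vfx.
by exists U => // y _ Uy; apply: HV => //; apply: HU.
Qed.

Lemma cont_comp_on {A B C : Type} (opA : set (set A)) (opB : set (set B)) (opC : set (set C))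
  U V (f : A -> B) (g : B -> C) :
  continuous_on opA opB U f -> (forall x, U x -> V (f x)) -> continuous_on opB opC V g ->
  continuous_on opA opC U (g \o f).
Proof.
move=> hf hUV hg x Ux O oO Ox; have [W [oW Wfx] HW] := hg (f x) (hUV x Ux) O oO Ox.
have [U' [oU' Ux'] HU'] := hf x Ux W oW Wfx.
by exists U' => // y Uy U'y; apply: HW; [apply: hUV|apply: HU'].
Qed.

Lemma cont_pair {A B C : Type} (opA : set (set A)) (opB : set (set B)) (opC : set (set C))
  W (g1 : A -> B) (g2 : A -> C) :
  (forall X Y, opA X -> opA Y -> opA (X `&` Y)) ->
  continuous_on opA opB W g1 -> continuous_on opA opC W g2 ->
  continuous_on opA (prod_open opB opC) W (fun x => (g1 x, g2 x)).
Proof.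
move=> hI c1 c2 x Wx O oO Ox; have [O1 [O2 [o1 o2 O1x O2x HO]]] := oO _ Ox.
have [U1 [oU1 U1x] H1] := c1 x Wx O1 o1 O1x.
have [U2 [oU2 U2x] H2] := c2 x Wx O2 o2 O2x.
exists (U1 `&` U2); first by split => //; apply: hI.
by move=> y Wy [U1y U2y]; apply: HO; [apply: H1|apply: H2].
Qed.

Lemma C0_weaken s1 s2 (E F : lmodType K) (opE : set (set E)) (opF : set (set F)) W g :
  tvsl abs opE -> 0 < s2 -> s2 <= s1 ->
  C0holder abs s1 opE opF W g -> C0holder abs s2 opE opF W g.
Proof.
move=> [hT hI ha hs] s20 s21 H x0 Wx0 q gq.
have [p [gp [U [oU Ux0] HU]]] := H x0 Wx0 q gq.
exists p; split => //.
case: gp => p0 pH pN.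
have [O [oO O0] HO] := pN 1 ltr01.
have h0 : O ((x0, -x0).1 + (x0, -x0).2) by rewrite /= subrr.
have [A [Bn [oA oB Ax0 Bx0 HAB]]] := cont2 (a := x0) (b := - x0) ha oO h0.
have h1 : Bn (((-1 : K) : K^o, x0).1 *: ((-1 : K) : K^o, x0).2) by rewrite /= scaleN1r.
have [T [C [oT oC Tm1 Cx0 HTC]]] := cont2 (a := ((-1 : K) : K^o)) (b := x0) hs oB h1.
exists (U `&` (A `&` C)); first by split => //; apply: (hI) => //; apply: (hI).
move=> x y Wx [Ux [Ax Cx]] Wy [Uy [Ay Cy]].
apply: (le_trans (HU x y Wx Ux Wy Uy)).
have hp : p (y - x) < 1.
  apply: HO; have -> : y - x = y + (-1) *: x by rewrite scaleN1r.
  by apply: (HAB y ((-1) *: x)) => //; exact: (HTC (-1) x).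
have pa := p0 (y - x).
case: (eqVneq (p (y - x)) 0) => [->|pn0].
  by rewrite !powR0 // gt_eqF // (lt_le_trans s20).
apply: (ger_powR _ s21); rewrite lt_neqAle eq_sym pn0 pa /=; exact: ltW.
Qed.

Lemma Ck_weaken s1 s2 (s20 : 0 < s2) (s21 : s2 <= s1) k :
  forall (E F : lmodType K) (opE : set (set E)) (opF : set (set F)) W g,
  tvsl abs opE -> CkHolder abs s1 k opE opF W g -> CkHolder abs s2 k opE opF W g.
Proof.
elim: k => [|k IH] E F opE opF W g hE /=.
- by case=> c h; split => //; apply: C0_weaken h.
- case=> c h [g1 [c1 e1 H1]]; split => //; first by apply: C0_weaken h.
  exists g1; split => //; apply: IH => //; exact: tvsl_E1.
Qed.

Lemma C0_lin (E F : lmodType K) (opE : set (set E)) (opF : set (set F)) (L : E -> F) W :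
  opE setT ->
  (forall x y, L (x + y) = L x + L y) -> (forall (t : K) x, L (t *: x) = t *: L x) ->
  continuous_on opE opF setT L -> C0holder abs 1 opE opF W L.
Proof.
move=> hT LD LZ Lc x0 _ q gq; exists (fun x => q (L x)); split; first exact: (gauge_lin LZ Lc gq).
exists setT; first by split.
move=> x y _ _ _ _; rewrite powRr1; last by case: gq => ->.
have -> : L (y - x) = L y - L x by rewrite LD -scaleN1r LZ scaleN1r.
by [].
Qed.

Lemma Ck_lin k : forall (E F : lmodType K) (opE : set (set E)) (opF : set (set F)) (L : E -> F) W,
  tvsl abs opE ->
  (forall x y, L (x + y) = L x + L y) -> (forall (t : K) x, L (t *: x) = t *: L x) ->
  continuous_on opE opF setT L -> CkHolder abs 1 k opE opF W L.
Proof.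
elim: k => [|k IH] E F opE opF L W hE LD LZ Lc /=.
  by split; [apply: cont_sub | apply: C0_lin => //; case: hE].
have hT : opE setT by case: hE.
have hTK : openK abs setT by move=> ? _; exists 1.
have Lc1 : continuous_on (topE1 abs opE) opF setT (fun z => L z.1.2).
  apply: (cont_comp (f := fun z : E * E * K^o => z.1.2) (g := L)); last exact: Lc.
  apply: (cont_comp (f := fun z : E * E * K^o => z.1) (g := snd)).
    exact: cont_fst.
  exact: cont_snd.
split; [exact: (cont_sub Lc) | by apply: C0_lin |].
exists (fun z => L z.1.2); split.
- exact: (cont_sub Lc1).
- move=> [[x y] t] [_ /= t0]; rewrite /diffquot /= LD LZ addrAC subrr add0r scalerA mulVf.
    by rewrite scale1r.
  exact/eqP.
- apply: IH => //; first exact: tvsl_E1.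
  + by move=> a b /=; apply: LD.
  + by move=> a b /=; apply: LZ.
Qed.

Section Pair.
Variables (F1 F2 : lmodType K) (op1 : set (set F1)) (op2 : set (set F2)).
Hypotheses (h1 : tvsl abs op1) (h2 : tvsl abs op2).

Lemma C0_pair s (E : lmodType K) (opE : set (set E)) W g1 g2 : 0 <= s ->
  (forall X Y, opE X -> opE Y -> opE (X `&` Y)) ->
  C0holder abs s opE op1 W g1 -> C0holder abs s opE op2 W g2 ->
  C0holder abs s opE (prod_open op1 op2) W (fun x => (g1 x, g2 x)).
Proof.
move=> s0 hI H1 H2 x0 Wx0 P gP.
have [q1 [q2 [gq1 gq2 Hq]]] := prod_gauge_bound Habs Hnd h1 h2 gP.
have [p1 [gp1 [U1 [oU1 U1x] HU1]]] := H1 x0 Wx0 q1 gq1.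
have [p2 [gp2 [U2 [oU2 U2x] HU2]]] := H2 x0 Wx0 q2 gq2.
exists (fun x => Num.max (p1 x) (p2 x)); split; first exact: gauge_max.
exists (U1 `&` U2); first by split => //; apply: hI.
move=> x y Wx [U1x' U2x'] Wy [U1y U2y].
change (P (g1 y - g1 x, g2 y - g2 x) <= (Num.max (p1 (y - x)) (p2 (y - x))) `^ s).
apply: le_trans (Hq _ _) _.
have pg1 : 0 <= p1 (y - x) by case: gp1 => ->.
have pg2 : 0 <= p2 (y - x) by case: gp2 => ->.
rewrite ge_max; apply/andP; split.
- apply: le_trans (HU1 x y Wx U1x' Wy U1y) _.
  by apply: ge0_ler_powR => //; rewrite ?nnegrE ?le_max ?lexx ?pg1 ?orbT.
- apply: le_trans (HU2 x y Wx U2x' Wy U2y) _.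
  by apply: ge0_ler_powR => //; rewrite ?nnegrE ?le_max ?lexx ?pg2 ?orbT.
Qed.

Lemma Ck_pair s (s0 : 0 <= s) k : forall (E : lmodType K) (opE : set (set E)) W g1 g2,
  tvsl abs opE -> CkHolder abs s k opE op1 W g1 -> CkHolder abs s k opE op2 W g2 ->
  CkHolder abs s k opE (prod_open op1 op2) W (fun x => (g1 x, g2 x)).
Proof.
elim: k => [|k IH] E opE W g1 g2 hE /=.
- case=> c1 k1 [c2 k2]; split.
    by apply: cont_pair => //; case: hE.
  by apply: C0_pair => //; case: hE.
- case=> c1 k1 [f1 [cf1 ef1 Hf1]] [c2 k2 [f2 [cf2 ef2 Hf2]]]; split.
  + by apply: cont_pair => //; case: hE.
  + by apply: C0_pair => //; case: hE.
  + exists (fun z => (f1 z, f2 z)); split.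
    * by apply: cont_pair => //; case: (tvsl_E1 Habs hE).
    * by move=> z hz; rewrite ef1 // ef2.
    * apply: IH => //; exact: tvsl_E1.
Qed.

End Pair.
End Ck.
Lemma pr11D (K : fieldType) (E : lmodType K) (x y : E * E * K^o) : (x + y).1.1 = x.1.1 + y.1.1.
Proof. by []. Qed.
Lemma pr11Z (K : fieldType) (E : lmodType K) (t : K) (x : E * E * K^o) : (t *: x).1.1 = t *: x.1.1.
Proof. by []. Qed.
Lemma pr2D (K : fieldType) (E : lmodType K) (x y : E * E * K^o) : (x + y).2 = x.2 + y.2.
Proof. by []. Qed.
Lemma pr2Z (K : fieldType) (E : lmodType K) (t : K) (x : E * E * K^o) : (t *: x).2 = t *: x.2.
Proof. by []. Qed.

Section Comp.
Variables (R : realType) (K : fieldType) (abs : K -> R).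
Hypothesis Habs : is_absval abs.
Hypothesis Hnd : nondiscrete abs.

Lemma C0_comp s t (E F H : lmodType K) (opE : set (set E)) (opF : set (set F))
  (opH : set (set H)) U V f g :
  (forall X Y, opE X -> opE Y -> opE (X `&` Y)) -> 0 <= t ->
  (forall x, U x -> V (f x)) -> continuous_on opE opF U f ->
  C0holder abs s opE opF U f -> C0holder abs t opF opH V g ->
  C0holder abs (s * t) opE opH U (g \o f).
Proof.
move=> hI t0 hUV cf Hf Hg x0 Ux0 q gq.
have [p [gp [UF [oUF UFx] HUF]]] := Hg (f x0) (hUV x0 Ux0) q gq.
have [p' [gp' [UE [oUE UEx] HUE]]] := Hf x0 Ux0 p gp.
have [UE' [oUE' UEx'] HUE'] := cf x0 Ux0 UF oUF UFx.
exists p'; split => //; exists (UE `&` UE'); first by split => //; apply: hI.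
move=> x y Ux [UEx1 UEx2] Uy [UEy1 UEy2] /=.
apply: le_trans (HUF (f x) (f y) (hUV x Ux) (HUE' x Ux UEx2) (hUV y Uy) (HUE' y Uy UEy2)) _.
rewrite powRrM; apply: ge0_ler_powR => //; rewrite ?nnegrE ?powR_ge0 //.
  by case: gp => ->.
exact: HUE.
Qed.

Lemma Ck_comp k : forall (E F H : lmodType K) (opE : set (set E)) (opF : set (set F))
  (opH : set (set H)) U V f g s t,
  tvsl abs opE -> tvsl abs opF -> 0 < s <= 1 -> 0 < t ->
  (forall x, U x -> V (f x)) ->
  CkHolder abs s k opE opF U f -> CkHolder abs t k opF opH V g ->
  CkHolder abs (s * t) k opE opH U (g \o f).
Proof.
elim: k => [|k IH] E F H opE opF opH U V f g s t hE hF /andP[s0 s1] t0 hUV.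
  case=> cf Hf [cg Hg] /=; split; first exact: (cont_comp_on cf hUV cg).
  by apply: (C0_comp _ (ltW t0) hUV cf Hf Hg); case: hE.
move=> Hf0 Hg0; have Hfk := Ck_down Hf0.
case: Hf0 => cf Hf [f1 [cf1 ef1 Hf1]]; case: Hg0 => cg Hg [g1 [cg1 eg1 Hg1]].
have hI : forall X Y, opE X -> opE Y -> opE (X `&` Y) by case: hE.
split; first exact: (cont_comp_on cf hUV cg).
  exact: (C0_comp hI (ltW t0) hUV cf Hf Hg).
pose h := fun z : E * E * K^o => ((f z.1.1, f1 z), z.2) : F * F * K^o.
exists (g1 \o h).
have hW : forall z, W1 U z -> W1 V (h z).
  move=> [[x y] t'] [/= Ux Uxy]; split => /=; first exact: hUV.
  case: (eqVneq t' 0) => [->|t'0]; first by rewrite scale0r addr0; apply: hUV.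
  rewrite ef1; last by split => //; apply/eqP.
  by rewrite /diffquot /= scalerA mulfV // scale1r addrC subrK; apply: hUV.
have hE1 := tvsl_E1 Habs hE.
have hTE1 : topE1 abs opE setT by case: hE1.
have hTE : opE setT by case: hE.
have hTK : openK abs setT by move=> ? _; exists 1.
have Hpr11 : CkHolder abs 1 k (topE1 abs opE) opE (W1 U) (fun z : E * E * K^o => z.1.1).
  apply: (@Ck_lin _ _ _ Habs k _ _ _ _ (fun z : E * E * K^o => z.1.1) (W1 U) hE1 (@pr11D _ E) (@pr11Z _ E)).
  apply: (cont_comp (f := fun z : E * E * K^o => z.1) (g := fst)); exact: cont_fst.
have Hpr2 : CkHolder abs 1 k (topE1 abs opE) (openK abs) (W1 U) (fun z : E * E * K^o => z.2).
  apply: (@Ck_lin _ _ _ Habs k _ _ _ _ (fun z : E * E * K^o => z.2) (W1 U) hE1 (@pr2D _ E) (@pr2Z _ E)).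
  by apply: cont_snd; apply: prod_setT.
have Hfp : CkHolder abs s k (topE1 abs opE) opF (W1 U) (f \o (fun z : E * E * K^o => z.1.1)).
  have h01 : 0 < (1:R) <= 1 by rewrite ltr01 lexx.
  have hU1 : forall z : E * E * K^o, W1 U z -> U z.1.1 by move=> z [].
  have := IH _ _ _ _ _ _ _ _ (fun z : E * E * K^o => z.1.1) f 1 s hE1 hE h01 s0 hU1 Hpr11 Hfk.
  by rewrite mul1r.
have Hh : CkHolder abs s k (topE1 abs opE) (topE1 abs opF) (W1 U) h.
  have hFF : tvsl abs (prod_open opF opF) := tvsl_prod hF hF.
  apply: (Ck_pair Habs Hnd hFF (tvsl_K Habs) (ltW s0) hE1).
  - exact: (Ck_pair Habs Hnd hF hF (ltW s0) hE1 Hfp Hf1).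
  - exact: (Ck_weaken Habs s0 s1 hE1 Hpr2).
have Hc := IH _ _ _ _ _ _ _ _ h g1 s t hE1 (tvsl_E1 Habs hF) (introT andP (conj s0 s1)) t0 hW Hh Hg1.
split.
- by case: (Ck_cont Hc).
- move=> [[x y] t'] [hz t'0] /=; rewrite eg1; last by split => //; apply: hW.
  have e := ef1 ((x, y), t') (conj hz t'0).
  rewrite /diffquot /= in e *; rewrite e scalerA mulfV; last exact/eqP.
  by rewrite scale1r addrCA subrr addr0.
- exact: Hc.
Qed.

End Comp.

Theorem lemma1p33 (R : realType) (K : fieldType) (abs : K -> R)
  (Habs : is_absval abs) (Hnd : nondiscrete abs)
  (E F H : lmodType K)
  (opE : set (set E)) (opF : set (set F)) (opH : set (set H))
  (HE : is_tvs abs opE) (HF : is_tvs abs opF) (HH : is_tvs abs opH)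
  (U : set E) (V : set F)
  (HU : dense_interior opE U) (HV : dense_interior opF V)
  (k : nat) (sigma tau : R) (Hsigma : 0 < sigma <= 1) (Htau : 0 < tau)
  (f : E -> F) (g : F -> H)
  (HfUV : forall x, U x -> V (f x))
  (Hf : CkHolder abs sigma k opE opF U f)
  (Hg : CkHolder abs tau k opF opH V g) :
  CkHolder abs (sigma * tau) k opE opH U (g \o f).
Proof.
exact: (Ck_comp Habs Hnd (tvs_tvsl HE) (tvs_tvsl HF) Hsigma Htau HfUV Hf Hg).
Qed.
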